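(* For any $\tau_f\in(\tau_2^i,\tau_c)$ there exists a unique $\tau_{po}=\tau_{po}(\tau_f)\in(\tau_1^i,\tau_2^i)$ such that, with $\tau_b=\tau_{po}(\tau_f)$, $$p'(\tau_b)=\frac{2h(\tau_b)-2h(\tau_f)}{\tau_b^2-\tau_f^2}<p'(\tau_f)$$ and Liu's extended entropy condition $\frac{2h(\tau_f)-2h(\tau_b)}{\tau_f^2-\tau_b^2}<\frac{2h(\tau_f)-2h(\tau)}{\tau_f^2-\tau^2}$ for all $\tau\in(\tau_b,\tau_f)$ hold. Moreover, $\frac{d\tau_{po}}{d\tau_f}<0$ for $\tau_f\in(\tau_2^i,\tau_c)$.
   Context: The pressure is $p(\tau)=\frac{\mathcal S}{(\tau-1)^\gamma}-\frac{1}{\tau^2}$ for $\tau>1$, with constants $1<\gamma<2$, $\mathcal S>0$, assumed such that there exist $1<\tau_1^i<\tau_2^i$ with $p'<0$ on $(1,\infty)$, $p''>0$ on $(1,\tau_1^i)\cup(\tau_2^i,\infty)$, $p''<0$ on $(\tau_1^i,\tau_2^i)$. The function $h$ satisfies $h'(\tau)=\tau p'(\tau)$. $\tau_c$ denotes the unique $\tau_c\in(\tau_1^i,\infty)$ with $p'(\tau_1^i)=\frac{2h(\tau_c)-2h(\tau_1^i)}{\tau_c^2-(\tau_1^i)^2}$. *)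

(* Defs.v *)
From Stdlib Require Import Reals Lra.
From Coquelicot Require Import Coquelicot.
Open Scope R_scope.

Definition pres (S gamma : R) (tau : R) : R :=
  S / Rpower (tau - 1) gamma - 1 / tau ^ 2.

Definition dpres (S gamma : R) (tau : R) : R := Derive (pres S gamma) tau.
Definition ddpres (S gamma : R) (tau : R) : R := Derive (dpres S gamma) tau.

Definition hchord (h : R -> R) (a b : R) : R :=
  (2 * h a - 2 * h b) / (a ^ 2 - b ^ 2).

(* Main.v *)
Require Import Defs.
From Stdlib Require Import Reals.
From Coquelicot Require Import Coquelicot.
Open Scope R_scope.
From Stdlib Require Import Lra.

Definition q0 (S gamma t : R) := - S * gamma / ((t-1) * exp (gamma * ln (t-1))) + 2 / t^3.

Lemma pres_der S gamma t : 1 < t -> is_derive (pres S gamma) t (q0 S gamma t).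
Proof.
  intros Ht. unfold pres, q0, Rpower.
  replace (t + - (1)) with (t - 1) by ring.
  auto_derive.
  - repeat split; try lra. apply Rgt_not_eq, exp_pos.
  - nra.
  - replace (t + - (1)) with (t - 1) by ring.
    assert (E := exp_pos (gamma * ln (t - 1))).
    field. repeat split; lra.
Qed.

Lemma dpres_eq S gamma t : 1 < t -> dpres S gamma t = q0 S gamma t.
Proof. intros; unfold dpres; now apply is_derive_unique, pres_der. Qed.

Lemma dpres_der S gamma t : 1 < t -> is_derive (dpres S gamma) t (ddpres S gamma t).
Proof.
  intros Ht. unfold ddpres. apply Derive_correct.
  apply (ex_derive_ext_loc (q0 S gamma)).
  - exists (mkposreal (t-1) ltac:(lra)). intros y Hy.
    rewrite dpres_eq; auto.
    cbv [ball] in Hy; simpl in Hy; unfold AbsRing_ball, abs, minus, plus, opp in Hy; simpl in Hy.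
    apply Rabs_lt_between in Hy. lra.
  - unfold q0. auto_derive. repeat split; try lra.
    + assert (E := exp_pos (gamma * ln (t + - (1)))). apply Rmult_integral_contrapositive; split; lra.
    + assert (0 < t * (t * (t * 1))) by (repeat apply Rmult_lt_0_compat; lra). lra.
Qed.
Definition Ff (q h : R -> R) (f b : R) := q b * (b^2 - f^2) - 2 * h b + 2 * h f.

Lemma mvt g g' a b : a < b -> (forall x, a <= x <= b -> is_derive g x (g' x)) ->
  exists c, a < c < b /\ g b - g a = g' c * (b - a).
Proof.
  intros Hab Hd. destruct (MVT_cor2 g g' a b Hab) as [c [E Hc]].
  - intros c Hc. apply is_derive_Reals, Hd; auto.
  - exists c; auto.
Qed.

Lemma ivt g a b : a < b -> (forall x, a <= x <= b -> continuous g x) -> g a < 0 -> 0 < g b ->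
  exists c, a < c < b /\ g c = 0.
Proof.
  intros Hab Hc Ha Hb.
  destruct (Ranalysis5.IVT_interv g a b) as [c [Hc1 Hc2]]; auto.
  - intros x Hx. apply continuity_pt_filterlim, Hc; auto.
  - exists c; split; auto. destruct Hc1 as [[H1|H1] [H2|H2]]; subst; try lra.
Qed.

Lemma F_derb q q' h f b : 1 < b -> is_derive q b (q' b) -> is_derive h b (b * q b) ->
  is_derive (fun x => Ff q h f x) b (q' b * (b^2 - f^2)).
Proof.
  intros Hb Hq Hh. unfold Ff. auto_derive.
  - split; [exists (q' b); auto | split; auto; exists (b * q b); auto].
  - replace (Derive (fun x : R => q x) b) with (q' b) by (symmetry; now apply is_derive_unique). replace (Derive (fun x : R => h x) b) with (b * q b) by (symmetry; now apply is_derive_unique). ring.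
Qed.

Lemma F_derf q h f b : 1 < f -> is_derive h f (f * q f) ->
  is_derive (fun y => Ff q h y b) f (2 * f * (q f - q b)).
Proof.
  intros Hf Hh. unfold Ff. auto_derive.
  - exists (f * q f); auto.
  - replace (Derive (fun x : R => h x) f) with (f * q f) by (symmetry; now apply is_derive_unique). ring.
Qed.

Definition Hyp (q q' h : R -> R) (t1 t2 tc : R) :=
  (1 < t1 < t2) /\ (forall x, 1 < x -> is_derive q x (q' x)) /\
  (forall x, t2 < x -> 0 < q' x) /\ (forall x, t1 < x < t2 -> q' x < 0) /\
  (forall x, 1 < x -> is_derive h x (x * q x)) /\
  (t1 < tc /\ q t1 = hchord h tc t1) /\
  (forall t, t1 < t -> q t1 = hchord h t t1 -> t = tc).


Lemma qdec q q' h t1 t2 tc : Hyp q q' h t1 t2 tc ->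
  forall x y, t1 <= x < y -> y <= t2 -> q y < q x.
Proof.
  intros (H12 & Hq & Ha & Hb & Hh & Hc & Hu) x y Hxy Hy.
  destruct (mvt q q' x y) as [c [Hc1 E]]; [lra | intros; apply Hq; lra |].
  assert (q' c < 0) by (apply Hb; lra). nra.
Qed.

Lemma qinc q q' h t1 t2 tc : Hyp q q' h t1 t2 tc ->
  forall x y, t2 <= x < y -> q x < q y.
Proof.
  intros (H12 & Hq & Ha & Hb & Hh & Hc & Hu) x y Hxy.
  destruct (mvt q q' x y) as [c [Hc1 E]]; [lra | intros; apply Hq; lra |].
  assert (0 < q' c) by (apply Ha; lra). nra.
Qed.

Lemma Finc q q' h t1 t2 tc : Hyp q q' h t1 t2 tc -> forall f, t2 < f ->
  forall x y, t1 <= x < y -> y <= t2 -> Ff q h f x < Ff q h f y.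
Proof.
  intros HY; pose proof HY as (H12 & Hq & Ha & Hb & Hh & Hc & Hu); intros f Hf x y Hxy Hy.
  destruct (mvt (fun b => Ff q h f b) (fun b => q' b * (b^2 - f^2)) x y) as [c [Hc1 E]];
    [lra | intros; apply F_derb; [lra | apply Hq; lra | apply Hh; lra] |].
  assert (q' c < 0) by (apply Hb; lra).
  assert (c^2 - f^2 < 0) by (assert (0 < (f - c) * (f + c)) by (apply Rmult_lt_0_compat; lra); nra).
  assert (0 < (- q' c) * (f^2 - c^2) * (y - x)) by (repeat apply Rmult_lt_0_compat; lra). lra.
Qed.

Lemma Fdec q q' h t1 t2 tc : Hyp q q' h t1 t2 tc -> forall f,
  forall x y, t2 <= x < y -> y <= f -> Ff q h f y < Ff q h f x.
Proof.
  intros HY; pose proof HY as (H12 & Hq & Ha & Hb & Hh & Hc & Hu); intros f x y Hxy Hy.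
  destruct (mvt (fun b => Ff q h f b) (fun b => q' b * (b^2 - f^2)) x y) as [c [Hc1 E]];
    [lra | intros; apply F_derb; [lra | apply Hq; lra | apply Hh; lra] |].
  assert (0 < q' c) by (apply Ha; lra).
  assert (c^2 - f^2 < 0) by (assert (0 < (f - c) * (f + c)) by (apply Rmult_lt_0_compat; lra); nra).
  assert (0 < q' c * (f^2 - c^2) * (y - x)) by (repeat apply Rmult_lt_0_compat; lra). lra.
Qed.

Lemma Fff q h f : Ff q h f f = 0.
Proof. unfold Ff; ring. Qed.

Lemma Kneg q q' h t1 t2 tc : Hyp q q' h t1 t2 tc -> forall f, t2 < f < tc ->
  Ff q h f t1 < 0.
Proof.
  intros HY; pose proof HY as (H12 & Hq & Ha & Hb & Hh & [Htc1 Htc2] & Hu); intros f Hf.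
  assert (K2 : Ff q h t2 t1 < 0).
  { destruct (mvt (fun y => Ff q h y t1) (fun y => 2 * y * (q y - q t1)) t1 t2) as [c [Hc1 E]];
    [lra | intros; apply F_derf; [lra | apply Hh; lra] |].
    rewrite Fff in E.
    assert (q c < q t1) by (apply (qdec _ _ _ _ _ _ HY); lra).
    assert (0 < 2 * c * (q t1 - q c) * (t2 - t1)) by (repeat apply Rmult_lt_0_compat; lra). lra. }
  destruct (Rlt_or_le (Ff q h f t1) 0) as [H|H]; auto. exfalso.
  assert (exists t, t2 < t <= f /\ Ff q h t t1 = 0) as [t [Ht Et]].
  { destruct H as [H|H].
    - destruct (ivt (fun y => Ff q h y t1) t2 f) as [t [Ht Et]]; auto; try lra.
      + intros x Hx. apply (@ex_derive_continuous R_AbsRing R_NormedModule). eexists. apply F_derf; [lra | apply Hh; lra].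
      + exists t; split; auto; lra.
    - exists f; split; auto; lra. }
  assert (t = tc); [| lra].
  apply Hu; [lra |]. unfold hchord. unfold Ff in Et.
  assert (0 < t^2 - t1^2) by nra.
  apply (Rmult_eq_reg_r (t^2 - t1^2)); [| lra].
  field_simplify; lra.
Qed.

Lemma cont_Fb q q' h t1 t2 tc : Hyp q q' h t1 t2 tc -> forall f x, 1 < x ->
  continuous (fun b => Ff q h f b) x.
Proof.
  intros (H12 & Hq & Ha & Hb & Hh & Hc & Hu) f x Hx.
  apply (@ex_derive_continuous R_AbsRing R_NormedModule). eexists.
  apply F_derb; auto.
Qed.

Lemma exist_b q q' h t1 t2 tc : Hyp q q' h t1 t2 tc -> forall f, t2 < f < tc ->
  exists b, t1 < b < t2 /\ Ff q h f b = 0.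
Proof.
  intros HY; pose proof HY as (H12 & Hq & Ha & Hb & Hh & [Htc1 Htc2] & Hu); intros f Hf.
  apply ivt; try lra.
  - intros; apply (cont_Fb _ _ _ _ _ _ HY); lra.
  - apply (Kneg _ _ _ _ _ _ HY); lra.
  - rewrite <- (Fff q h f). apply (Fdec _ _ _ _ _ _ HY); lra.
Qed.

Lemma uniq_b q q' h t1 t2 tc : Hyp q q' h t1 t2 tc -> forall f, t2 < f ->
  forall b1 b2, t1 <= b1 <= t2 -> t1 <= b2 <= t2 -> Ff q h f b1 = 0 -> Ff q h f b2 = 0 -> b1 = b2.
Proof.
  intros HY f Hf b1 b2 H1 H2 E1 E2.
  destruct (Rtotal_order b1 b2) as [H|[H|H]]; auto.
  - pose proof (Finc _ _ _ _ _ _ HY f Hf b1 b2); lra.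
  - pose proof (Finc _ _ _ _ _ _ HY f Hf b2 b1); lra.
Qed.

Lemma hchord_eq q h f b : b^2 <> f^2 -> (Ff q h f b = 0 <-> q b = hchord h b f).
Proof.
  intros Hne. unfold Ff, hchord.
  assert (b^2 - f^2 <> 0) by lra.
  split; intros E.
  - apply (Rmult_eq_reg_r (b^2 - f^2)); auto. field_simplify; auto. lra.
  - rewrite E. field; auto.
Qed.

Lemma props q q' h t1 t2 tc : Hyp q q' h t1 t2 tc -> forall f b, t2 < f -> t1 < b < t2 ->
  Ff q h f b = 0 ->
  q b = hchord h b f /\ hchord h b f < q f /\
  (forall tau, b < tau < f -> hchord h f b < hchord h f tau).
Proof.
  intros HY; pose proof HY as (H12 & Hq & Ha & Hb & Hh & [Htc1 Htc2] & Hu); intros f b Hf Hbb E.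
  assert (Hbf : b^2 <> f^2) by nra.
  assert (Eq : q b = hchord h b f) by (apply hchord_eq; auto).
  set (D := fun x => 2 * h x - 2 * h b - q b * (x^2 - b^2)).
  assert (Dd : forall x, 1 < x -> is_derive D x (2 * x * (q x - q b))).
  { intros x Hx. unfold D. auto_derive.
    - exists (x * q x). apply Hh; lra.
    - replace (Derive (fun x : R => h x) x) with (x * q x) by (symmetry; apply is_derive_unique; apply Hh; lra). ring. }
  assert (Db : D b = 0) by (unfold D; ring).
  assert (Df : D f = 0) by (unfold D, Ff in *; lra).
  assert (Dn1 : forall x, b < x <= t2 -> D x < 0).
  { intros x Hx.
    destruct (mvt D (fun x => 2 * x * (q x - q b)) b x) as [c [Hc1 Ec]]; [lra | intros; apply Dd; lra |].
    assert (q c < q b) by (apply (qdec _ _ _ _ _ _ HY); lra).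
    assert (0 < 2 * c * (q b - q c) * (x - b)) by (repeat apply Rmult_lt_0_compat; lra). lra. }
  assert (Dt2 := Dn1 t2 ltac:(lra)).
  assert (Hqf : q b < q f).
  { destruct (mvt D (fun x => 2 * x * (q x - q b)) t2 f) as [c [Hc1 Ec]]; [lra | intros; apply Dd; lra |].
    destruct (Rlt_or_le (q b) (q c)) as [Hl|Hl].
    - assert (q c < q f) by (apply (qinc _ _ _ _ _ _ HY); lra). lra.
    - assert (0 <= 2 * c * (q b - q c) * (f - t2)) by
        (apply Rmult_le_pos; [apply Rmult_le_pos|]; lra). lra. }
  assert (Dn : forall x, b < x < f -> D x < 0).
  { intros x Hx. destruct (Rle_or_lt x t2) as [Hx2|Hx2]; [apply Dn1; lra|].
    destruct (Rlt_or_le (D x) 0) as [Hl|Hl]; auto. exfalso.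
    destruct (mvt D (fun x => 2 * x * (q x - q b)) t2 x) as [c1 [Hc1 Ec1]]; [lra | intros; apply Dd; lra |].
    assert (Hq1 : q b < q c1).
    { destruct (Rlt_or_le (q b) (q c1)) as [Hm|Hm]; auto.
      assert (0 <= 2 * c1 * (q b - q c1) * (x - t2)) by
        (apply Rmult_le_pos; [apply Rmult_le_pos|]; lra). lra. }
    destruct (mvt D (fun x => 2 * x * (q x - q b)) x f) as [c2 [Hc2 Ec2]]; [lra | intros; apply Dd; lra |].
    assert (q c1 < q c2) by (apply (qinc _ _ _ _ _ _ HY); lra).
    assert (0 < 2 * c2 * (q c2 - q b) * (f - x)) by (repeat apply Rmult_lt_0_compat; lra). lra. }
  assert (Hsym : hchord h f b = hchord h b f).
  { unfold hchord. field. split; lra. }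
  split; [auto | split; [lra |]].
  intros tau Ht. rewrite Hsym, <- Eq. unfold hchord.
  assert (0 < f^2 - tau^2) by (assert (0 < (f - tau) * (f + tau)) by (apply Rmult_lt_0_compat; lra); nra).
  assert (Dt := Dn tau Ht). unfold D in Dt, Df.
  apply (Rmult_lt_reg_r (f^2 - tau^2)); auto.
  field_simplify; lra.
Qed.

Lemma ballR (x e y : R) : ball x e y <-> Rabs (y - x) < e.
Proof. reflexivity. Qed.

Lemma cont_lt (g : R -> R) x : continuous g x -> g x < 0 -> locally x (fun y => g y < 0).
Proof.
  intros Hc Hx. apply filterlim_locally with (eps := mkposreal (- g x) ltac:(lra)) in Hc.
  eapply filter_imp; [| exact Hc]. intros y Hy. apply ballR in Hy. simpl in Hy. unfold minus, plus, opp in Hy; simpl in Hy.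
  apply Rabs_lt_between in Hy. unfold minus, plus, opp in Hy; simpl in Hy. lra.
Qed.

Lemma cont_gt (g : R -> R) x : continuous g x -> 0 < g x -> locally x (fun y => 0 < g y).
Proof.
  intros Hc Hx. apply filterlim_locally with (eps := mkposreal (g x) ltac:(lra)) in Hc.
  eapply filter_imp; [| exact Hc]. intros y Hy. apply ballR in Hy. simpl in Hy. unfold minus, plus, opp in Hy; simpl in Hy.
  apply Rabs_lt_between in Hy. unfold minus, plus, opp in Hy; simpl in Hy. lra.
Qed.

Lemma loc_int a b x : a < x < b -> locally x (fun y => a < y < b).
Proof.
  intros H. exists (mkposreal (Rmin (x - a) (b - x)) ltac:(apply Rmin_pos; lra)).
  intros y Hy. apply ballR in Hy. simpl in Hy. unfold minus, plus, opp in Hy; simpl in Hy. apply Rabs_lt_between in Hy. unfold minus, plus, opp in Hy; simpl in Hy.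
  pose proof (Rmin_l (x - a) (b - x)); pose proof (Rmin_r (x - a) (b - x)). lra.
Qed.

Lemma cont_B q q' h t1 t2 tc : Hyp q q' h t1 t2 tc -> forall B : R -> R,
  (forall y, t2 < y < tc -> t1 < B y < t2 /\ Ff q h y (B y) = 0) ->
  forall f, t2 < f < tc -> continuous B f.
Proof.
  intros HY; pose proof HY as (H12 & Hq & Ha & Hb & Hh & [Htc1 Htc2] & Hu); intros B HB f Hf.
  destruct (HB f Hf) as [Hbf Ebf].
  apply filterlim_locally. intros eps.
  set (b := B f) in *.
  set (e := Rmin (eps / 2) (Rmin ((b - t1) / 2) ((t2 - b) / 2))).
  assert (He : 0 < e) by (unfold e; repeat apply Rmin_pos; try lra; destruct eps; simpl; lra).
  assert (He1 : e <= eps / 2) by apply Rmin_l.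
  assert (He2 : e <= (b - t1) / 2) by (eapply Rle_trans; [apply Rmin_r | apply Rmin_l]).
  assert (He3 : e <= (t2 - b) / 2) by (eapply Rle_trans; [apply Rmin_r | apply Rmin_r]).
  assert (L : Ff q h f (b - e) < 0).
  { rewrite <- Ebf. apply (Finc _ _ _ _ _ _ HY); lra. }
  assert (U : 0 < Ff q h f (b + e)).
  { rewrite <- Ebf. apply (Finc _ _ _ _ _ _ HY); lra. }
  assert (CL : locally f (fun y => Ff q h y (b - e) < 0)).
  { apply (cont_lt (fun y => Ff q h y (b - e))); auto.
    apply (@ex_derive_continuous R_AbsRing R_NormedModule). eexists.
    apply F_derf; [lra | apply Hh; lra]. }
  assert (CU : locally f (fun y => 0 < Ff q h y (b + e))).
  { apply (cont_gt (fun y => Ff q h y (b + e))); auto.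
    apply (@ex_derive_continuous R_AbsRing R_NormedModule). eexists.
    apply F_derf; [lra | apply Hh; lra]. }
  generalize (filter_and _ _ CL (filter_and _ _ CU (loc_int t2 tc f Hf))).
  apply filter_imp. intros y (H1 & H2 & H3).
  destruct (HB y H3) as [Hy Ey].
  apply ballR.
  assert (b - e < B y).
  { destruct (Rlt_or_le (b - e) (B y)) as [K|[K|K]]; auto.
    - pose proof (Finc _ _ _ _ _ _ HY y ltac:(lra) (B y) (b - e) ltac:(lra) ltac:(lra)). lra.
    - rewrite K in Ey. lra. }
  assert (B y < b + e).
  { destruct (Rlt_or_le (B y) (b + e)) as [K|[K|K]]; auto.
    - pose proof (Finc _ _ _ _ _ _ HY y ltac:(lra) (b + e) (B y) ltac:(lra) ltac:(lra)). lra.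
    - rewrite <- K in Ey. lra. }
  apply Rabs_lt_between. destruct eps; simpl in *; lra.
Qed.

Lemma lim_of_der (g : R -> R) x l : is_derive g x l -> is_lim (fun y => (g y - g x) / (y - x)) x l.
Proof.
  intros Hd. apply is_derive_Reals in Hd. apply is_lim_spec. intros eps.
  destruct (Hd eps (cond_pos eps)) as [delta Hde].
  simpl. unfold locally', within. exists delta. intros y Hy Hne. change R in y.
  apply ballR in Hy. unfold minus, plus, opp in Hy; simpl in Hy.
  assert (y - x <> 0) by lra.
  specialize (Hde (y - x) H Hy). replace (x + (y - x)) with y in Hde by ring. exact Hde.
Qed.

Lemma der_of_lim (g : R -> R) (x l : R) : is_lim (fun y => (g y - g x) / (y - x)) x l -> is_derive g x l.
Proof.
  intros Hl. apply is_derive_Reals. intros eps Heps.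
  apply is_lim_spec in Hl. unfold is_lim' in Hl. specialize (Hl (mkposreal eps Heps)).
  simpl in Hl. unfold locally', within in Hl. destruct Hl as [delta Hde].
  exists delta. intros k Hk0 Hk.
  assert (Hb : ball x delta (x + k)).
  { apply ballR. change (Rabs (x + k - x) < delta). replace (x + k - x) with k by ring. auto. }
  specialize (Hde (x + k) Hb ltac:(lra)). simpl in Hde.
  replace (x + k - x) with k in Hde by ring. exact Hde.
Qed.

Lemma cont_lim (g : R -> R) (x : R) : continuous g x -> is_lim g x (g x).
Proof. intros H. apply is_lim_continuity, continuity_pt_filterlim, H. Qed.

Lemma deriv_B q q' h t1 t2 tc : Hyp q q' h t1 t2 tc -> forall B : R -> R,
  (forall y, t2 < y < tc -> t1 < B y < t2 /\ Ff q h y (B y) = 0) ->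
  forall f, t2 < f < tc -> exists d, is_derive B f d /\ d < 0.
Proof.
  intros HY; pose proof HY as (H12 & Hq & Ha & Hb & Hh & [Htc1 Htc2] & Hu); intros B HB f Hf.
  pose proof (cont_B _ _ _ _ _ _ HY B HB f Hf) as HBc.
  destruct (HB f Hf) as [Hbf Ebf].
  set (b := B f) in *.
  set (L := q' b * (b^2 - f^2)).
  assert (HL : 0 < L).
  { unfold L. assert (q' b < 0) by (apply Hb; lra).
    assert (b^2 - f^2 < 0) by (assert (0 < (f - b) * (f + b)) by (apply Rmult_lt_0_compat; lra); nra).
    nra. }
  assert (Hgd : is_derive (fun x => Ff q h f x) b L) by (apply F_derb; [lra | apply Hq; lra | apply Hh; lra]).
  set (phi := fun x => if Req_EM_T x b then L else (Ff q h f x - Ff q h f b) / (x - b)).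
  assert (phib : phi b = L) by (unfold phi; destruct Req_EM_T; congruence).
  assert (Hphic : continuous phi b).
  { apply filterlim_locally; intros eps.
    apply is_derive_Reals in Hgd. destruct (Hgd eps (cond_pos eps)) as [delta Hd].
    exists delta. intros y Hy. change R in y. apply ballR in Hy. apply ballR.
    unfold minus, plus, opp in *; simpl in *. rewrite phib.
    unfold phi. destruct (Req_EM_T y b) as [E|E].
    - replace (L - L) with 0 by ring. rewrite Rabs_R0. apply cond_pos.
    - assert (y - b <> 0) by lra.
      specialize (Hd (y - b) H Hy). replace (b + (y - b)) with y in Hd by ring. exact Hd. }
  assert (Hfac : forall x, Ff q h f x = phi x * (x - b)).
  { intros x. unfold phi. destruct (Req_EM_T x b) as [E|E].
    - subst x. rewrite Ebf. ring.
    - rewrite Ebf. field. lra. }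
  assert (HpB : continuous (fun y => phi (B y)) f) by (apply continuous_comp; auto).
  assert (Lpos : locally f (fun y => 0 < phi (B y))).
  { apply (cont_gt (fun y => phi (B y))); auto. unfold b in phib. rewrite phib. auto. }
  assert (HqB : continuous (fun y => q (B y)) f).
  { apply continuous_comp; auto. apply (@ex_derive_continuous R_AbsRing R_NormedModule).
    eexists. apply Hq. change (1 < b). lra. }
  assert (Lim1 : is_lim (fun y => q (B y) * (y + f) - 2 * ((h y - h f) / (y - f))) f
                   (q b * (f + f) - 2 * (f * q f))).
  { eapply is_lim_minus.
    - apply (is_lim_mult _ _ _ (q b) (f + f)).
      + apply (cont_lim (fun y => q (B y))); auto.
      + eapply is_lim_plus; [apply is_lim_id | apply is_lim_const | reflexivity].
      + exact I.
    - apply (is_lim_scal_l _ 2 _ (f * q f)). apply lim_of_der. apply Hh; lra.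
    - reflexivity. }
  assert (Lim2 : is_lim (fun y => (q (B y) * (y + f) - 2 * ((h y - h f) / (y - f))) / phi (B y)) f
                   ((q b * (f + f) - 2 * (f * q f)) / L)).
  { apply (is_lim_div _ _ _ (q b * (f + f) - 2 * (f * q f)) L); auto.
    - rewrite <- phib. apply (cont_lim (fun y => phi (B y))); auto.
    - intros E. injection E. lra.
    - exact I. }
  exists ((q b * (f + f) - 2 * (f * q f)) / L). split.
  - apply der_of_lim. eapply is_lim_ext_loc; [| exact Lim2].
    simpl. unfold locally', within.
    generalize (filter_and _ _ Lpos (loc_int t2 tc f Hf)).
    apply filter_imp. intros y [Hp Hy] Hne. change R in y.
    destruct (HB y Hy) as [HBy EBy].
    assert (E1 := Hfac (B y)).
    assert (E2 : Ff q h y (B y) - Ff q h f (B y) = q (B y) * (f^2 - y^2) + 2 * h y - 2 * h f)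
      by (unfold Ff; ring).
    assert (y - f <> 0) by lra.
    apply (Rmult_eq_reg_r (phi (B y) * (y - f))); [| apply Rmult_integral_contrapositive; split; lra].
    field_simplify; [| lra | lra]. unfold b in *. lra.
  - destruct (props _ _ _ _ _ _ HY f b ltac:(lra) ltac:(lra) Ebf) as (P1 & P2 & _).
    assert (q b < q f) by lra.
    assert (0 < / L) by (apply Rinv_0_lt_compat; auto).
    unfold Rdiv. assert (q b * (f + f) - 2 * (f * q f) < 0) by nra. nra.
Qed.

From Stdlib Require Import Classical IndefiniteDescription.

Lemma core q q' h t1 t2 tc : Hyp q q' h t1 t2 tc ->
  exists tpo : R -> R,
    forall tf, t2 < tf < tc ->
      (t1 < tpo tf < t2
       /\ q (tpo tf) = hchord h (tpo tf) tf
       /\ hchord h (tpo tf) tf < q tf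
       /\ (forall tau, tpo tf < tau < tf -> hchord h tf (tpo tf) < hchord h tf tau))
      /\ (forall tb, t1 < tb < t2 ->
            q tb = hchord h tb tf ->
            hchord h tb tf < q tf ->
            (forall tau, tb < tau < tf -> hchord h tf tb < hchord h tf tau) ->
            tb = tpo tf)
      /\ (exists d, is_derive tpo tf d /\ d < 0).
Proof.
  intros HY; pose proof HY as (H12 & Hq & Ha & Hb & Hh & [Htc1 Htc2] & Hu).
  assert (Ex : forall f, exists b, t2 < f < tc -> t1 < b < t2 /\ Ff q h f b = 0).
  { intros f. destruct (classic (t2 < f < tc)) as [H|H].
    - destruct (exist_b _ _ _ _ _ _ HY f H) as [b Hb']. exists b; auto.
    - exists 0. intros H'. contradiction. }
  set (B := fun f => proj1_sig (constructive_indefinite_description _ (Ex f))).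
  assert (HB : forall y, t2 < y < tc -> t1 < B y < t2 /\ Ff q h y (B y) = 0).
  { intros y Hy. unfold B. destruct (constructive_indefinite_description _ (Ex y)) as [b Hb']. simpl. auto. }
  exists B. intros tf Htf.
  destruct (HB tf Htf) as [Hbt Ebt].
  destruct (props _ _ _ _ _ _ HY tf (B tf) ltac:(lra) Hbt Ebt) as (P1 & P2 & P3).
  split; [| split].
  - auto.
  - intros tb Htb E _ _.
    apply (uniq_b _ _ _ _ _ _ HY tf ltac:(lra)); try lra.
    apply hchord_eq; auto. nra.
  - apply (deriv_B _ _ _ _ _ _ HY B HB tf Htf).
Qed.

Theorem proposition3p3
  (S gamma : R) (h : R -> R) (tau1 tau2 tauc : R)
  (Hgamma : 1 < gamma < 2) (HS : 0 < S)
  (H12 : 1 < tau1 < tau2)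
  (Hp1 : forall tau, 1 < tau -> dpres S gamma tau < 0)
  (Hp2a : forall tau, (1 < tau < tau1 \/ tau2 < tau) -> 0 < ddpres S gamma tau)
  (Hp2b : forall tau, tau1 < tau < tau2 -> ddpres S gamma tau < 0)
  (Hh : forall tau, 1 < tau -> is_derive h tau (tau * dpres S gamma tau))
  (Htauc : tau1 < tauc /\ dpres S gamma tau1 = hchord h tauc tau1)
  (Htauc_uniq : forall t, tau1 < t -> dpres S gamma tau1 = hchord h t tau1 -> t = tauc) :
  exists tpo : R -> R,
    forall tf, tau2 < tf < tauc ->
      (tau1 < tpo tf < tau2
       /\ dpres S gamma (tpo tf) = hchord h (tpo tf) tf
       /\ hchord h (tpo tf) tf < dpres S gamma tf
       /\ (forall tau, tpo tf < tau < tf -> hchord h tf (tpo tf) < hchord h tf tau))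
      /\ (forall tb, tau1 < tb < tau2 ->
            dpres S gamma tb = hchord h tb tf ->
            hchord h tb tf < dpres S gamma tf ->
            (forall tau, tb < tau < tf -> hchord h tf tb < hchord h tf tau) ->
            tb = tpo tf)
      /\ (exists d, is_derive tpo tf d /\ d < 0).
Proof.
  apply (core (dpres S gamma) (ddpres S gamma) h tau1 tau2 tauc).
  split; [auto|]. split; [intros; apply dpres_der; auto|].
  split; [intros; apply Hp2a; right; auto|].
  split; [auto|]. split; [auto|]. split; auto.
Qed.
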